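(* Let $n$ and $s$ be sufficiently large, $k\in\mathbb N$ and $0<\varepsilon<1$. Suppose $G$ is an $n$-vertex $(\varepsilon,s)$-expander and $\frac{\varepsilon s}{k}\ge 10^5(\log n)^3$. Then there are pairwise edge-disjoint graphs $G_1,\dots,G_k$ with $E(G)=\bigcup_{i\in[k]}E(G_i)$ such that each $G_i$ has vertex set $V(G)$ and is an $\left(\frac{\varepsilon}{4},\frac{\varepsilon s}{10^4k(\log n)^2}\right)$-expander.
   Context: Logarithms are base 2. For $U\subseteq V(G)$, $N_G(U)$ is the set of vertices outside $U$ with a neighbour in $U$; $G-F$ is $G$ with edge set $F$ deleted. An $n$-vertex graph $G$ is an $(\varepsilon,s)$-expander if for every $U\subseteq V(G)$, $F\subseteq E(G)$ with $1\le|U|\le\frac23n$ and $|F|\le s|U|$ we have $|N_{G-F}(U)|\ge\varepsilon|U|/(\log n)^2$. *)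

(* Defs.v *)
From HB Require Import structures.
From mathcomp Require Import all_boot all_order all_algebra.
From mathcomp Require Import reals exp.
Set Implicit Arguments. Unset Strict Implicit. Unset Printing Implicit Defensive.
Import Order.TTheory GRing.Theory Num.Theory.
Local Open Scope ring_scope.

Definition log2 {R : realType} (x : R) : R := ln x / ln 2.

Definition simple_graph (T : finType) (E : {set {set T}}) : Prop :=
  forall e, e \in E -> #|e| = 2%N.

Definition nbh (T : finType) (E : {set {set T}}) (U : {set T}) : {set T} :=
  [set v | (v \notin U) && [exists u in U, [set u; v] \in E]].

Definition expander {R : realType} (T : finType) (E : {set {set T}})
    (eps s : R) : Prop :=
  forall (U : {set T}) (F : {set {set T}}),
    (1 <= #|U|)%N ->
    (#|U|%:R : R) <= 2 / 3 * #|T|%:R ->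
    F \subset E ->
    (#|F|%:R : R) <= s * #|U|%:R ->
    eps * #|U|%:R / (log2 (#|T|%:R : R)) ^+ 2 <= #|nbh (E :\: F) U|%:R.

(* Main.v *)
Require Import Defs.
From HB Require Import structures.
From mathcomp Require Import all_boot all_order all_algebra.
From mathcomp Require Import reals exp.
From mathcomp Require Import sequences ring lra.
Import Order.TTheory GRing.Theory Num.Theory.
Local Open Scope ring_scope.

Lemma card_small_sets (T : finType) (j : nat) :
  (#|[set A : {set T} | (#|A| <= j)%N]| <= (#|T|.+1) ^ j)%N.
Proof.
pose phi (f : {ffun 'I_j -> option T}) : {set T} := [set x | Some x \in codom f].
apply: (@leq_trans #|[set phi f | f in [set: {ffun 'I_j -> option T}]]|).
  apply: subset_leq_card; apply/subsetP => A; rewrite inE => hA.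
  apply/imsetP.
  exists [ffun i : 'I_j => nth None (map Some (enum A)) i]; first by rewrite inE.
  apply/setP => x; rewrite inE; apply/idP/codomP.
  - move=> xA. have xin : x \in enum A by rewrite mem_enum.
    have hi : (index x (enum A) < j)%N.
      by apply: leq_trans hA; rewrite cardE index_mem.
    exists (Ordinal hi); rewrite ffunE /= (nth_map x) ?nth_index //.
    by rewrite index_mem.
  - case=> i; rewrite ffunE.
    case: (ltnP i (size (enum A))) => hi.
      by rewrite (nth_map x) // => -[->]; rewrite -mem_enum mem_nth.
    by rewrite nth_default ?size_map.
apply: leq_trans (leq_imset_card _ _) _.
by rewrite cardsT card_ffun card_option card_ord.
Qed.

Lemma mgf (R : realType) (T : finType) (k : nat) (S : {set {set T}}) (i : 'I_k) :
  \sum_(c : {ffun {set T} -> 'I_k}) ((1/2 : R) ^+ #|[set e in S | c e == i]|)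
  = (k%:R ^+ #|{set T}|) * (1 - 1 / (2 * k%:R)) ^+ #|S|.
Proof.
pose F (e : {set T}) (j : 'I_k) : R := if (e \in S) && (j == i) then 1/2 else 1.
have H1 : forall c : {ffun {set T} -> 'I_k},
    (1/2 : R) ^+ #|[set e in S | c e == i]| = \prod_e F e (c e).
  move=> c; rewrite -prodr_const /F big_mkcond /=.
  by apply: eq_bigr => e _; rewrite inE.
rewrite (eq_bigr _ (fun c _ => H1 c)) -(bigA_distr_bigA F).
have H2 : forall e, \sum_j F e j = k%:R * (if e \in S then 1 - 1/(2 * k%:R) else 1).
  move=> e; rewrite /F; case: (e \in S) => /=; last first.
    by rewrite sumr_const card_ord mulr1 -[LHS]mulr_natl mulr1.
  rewrite (bigD1 i) //= eqxx.
  rewrite (eq_bigr (fun _ => 1)); last by move=> j /negbTE ->.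
  rewrite sumr_const cardC1 card_ord.
  have kp : (0 < k)%N by case: (i) => ? /= h; apply: leq_ltn_trans h.
  have k0 : (k%:R : R) != 0 by rewrite pnatr_eq0 -lt0n.
  have ek : (k%:R : R) = k.-1%:R + 1 by rewrite natr1 prednK.
  rewrite ek in k0 *; field; exact: k0.
rewrite (eq_bigr _ (fun e _ => H2 e)) big_split /= prodr_const.
congr (_ * _); rewrite -big_mkcond /= prodr_const.
by [].
Qed.

Lemma half_expR (R : realType) : (1/2 : R) = expR (- ln 2).
Proof. by rewrite expRN lnK ?posrE // div1r. Qed.

Lemma ln2_gt0 (R : realType) : (0 : R) < ln 2.
Proof. by rewrite -ln1 ltr_ln ?posrE // ltr1n. Qed.

Lemma bad_count (R : realType) (T : finType) (k : nat) (S : {set {set T}})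
    (i : 'I_k) (t : R) : (0 < k)%N ->
  #|[set c : {ffun {set T} -> 'I_k} | #|[set e in S | c e == i]|%:R <= t]|%:R
   <= k%:R ^+ #|{set T}| * expR (t * ln 2 - #|S|%:R / (2 * k%:R)).
Proof.
move=> kp.
set B := [set c | _].
have k0 : (0 : R) < k%:R by rewrite ltr0n.
have H1 : (#|B|%:R : R) * expR (t * - ln 2)
    <= \sum_(c : {ffun {set T} -> 'I_k}) ((1/2 : R) ^+ #|[set e in S | c e == i]|).
  rewrite -sum1_card natr_sum mulr_suml big_mkcond /=.
  apply: ler_sum => c _; rewrite mul1r.
  case: ifP => [|_]; last by apply: exprn_ge0; lra.
  rewrite inE => hc; rewrite mul1r -div1r half_expR -expRM_natl ler_expR.
  by rewrite ler_wnM2r // oppr_le0 ltW // ln2_gt0.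
rewrite mgf in H1.
have H2 : (1 - 1 / (2 * k%:R) : R) ^+ #|S| <= expR (- #|S|%:R / (2 * k%:R)).
  have -> : (- #|S|%:R / (2 * k%:R) : R) = #|S|%:R * (- (1 / (2 * k%:R))) by ring.
  rewrite expRM_natl; apply: lerXn2r; rewrite ?nnegrE ?expR_ge0 //.
    rewrite subr_ge0 ler_pdivrMr ?mul1r; last by rewrite mulr_gt0.
    by rewrite -natrM ler1n muln_gt0.
  exact: expR_ge1Dx.

have H3 := le_trans H1 (ler_wpM2l (exprn_ge0 _ (ltW k0)) H2).
rewrite mulrN expRN ler_pdivrMr ?expR_gt0 // in H3.
rewrite expRD [X in _ <= _ * X]mulrC mulrA.
by move: H3; rewrite mulNr.
Qed.

Lemma le_sum1 (R : realType) (I : finType) (F : I -> R) (x : I) :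
  (forall i, 0 <= F i) -> F x <= \sum_i F i.
Proof. by move=> h; rewrite (bigD1 x) //= lerDl sumr_ge0. Qed.

Lemma sum_if_card (R : realType) (I : finType) (P : pred I) (a : R) :
  \sum_i (if P i then a else 0) = #|[set i | P i]|%:R * a.
Proof.
by rewrite -big_mkcond /= sumr_const cardsE mulr_natl.
Qed.

Lemma group_sizes (R : realType) (T : finType) (f : nat -> R) :
  \sum_(U : {set T}) f #|U| = \sum_(u < #|T|.+1) #|[set U : {set T} | #|U| == u]|%:R * f u.
Proof.
rewrite (partition_big (fun U : {set T} => (inord #|U| : 'I_#|T|.+1)) xpredT) //=.
apply: eq_bigr => j _.
rewrite -sum_if_card big_mkcond /=; apply: eq_bigr => U _.
have hU : (#|U| < #|T|.+1)%N by rewrite ltnS max_card.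
rewrite -val_eqE /= inordK //.
by case: eqP => // ->.
Qed.

Lemma exists_good (R : realType) (T : finType) (k : nat)
    (S : {set T} -> {set T} -> {set {set T}}) (s s' : R) :
  (0 < k)%N -> (k <= #|T|.+1)%N -> (1 <= #|T|)%N ->
  (forall u m : nat, (1 <= u)%N -> s * u%:R < m%:R ->
     expR (s' * u%:R * ln 2 - m%:R / (2 * k%:R)) * ((#|T|.+1)%:R) ^+ (5 * u) <= 1) ->
  exists c : {ffun {set T} -> 'I_k}, forall (i : 'I_k) (U Y : {set T}),
    (1 <= #|U|)%N -> (#|Y| <= #|U|)%N -> s * #|U|%:R < #|S U Y|%:R ->
    s' * #|U|%:R < #|[set e in S U Y | c e == i]|%:R.
Proof.
move=> kp kn n1 Hnum.
set N1 : R := (#|T|.+1)%:R.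
have N1gt0 : 0 < N1 by rewrite ltr0n.
pose cond (U Y : {set T}) := [&& (1 <= #|U|)%N, (#|Y| <= #|U|)%N & s * #|U|%:R < #|S U Y|%:R].
pose good (c : {ffun {set T} -> 'I_k}) := [forall i : 'I_k, forall U : {set T}, forall Y : {set T},
   cond U Y ==> (s' * #|U|%:R < #|[set e in S U Y | c e == i]|%:R)].
case: (boolP [exists c, good c]) => [/existsP [c /forallP Hc]|].
  exists c => i U Y h1 h2 h3.
  move: (Hc i) => /forallP /(_ U) /forallP /(_ Y) /implyP; apply.
  by rewrite /cond h1 h2 h3.
rewrite negb_exists => /forallP Hbad; exfalso.
set K : R := #|{ffun {set T} -> 'I_k}|%:R.
have Kgt0 : 0 < K by rewrite ltr0n card_ffun card_ord expn_gt0 kp.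
pose b (i : 'I_k) (U Y : {set T}) (c : {ffun {set T} -> 'I_k}) : R :=
  if cond U Y && (#|[set e in S U Y | c e == i]|%:R <= s' * #|U|%:R) then 1 else 0.
have b0 : forall i U Y c, 0 <= b i U Y c by move=> i U Y c; rewrite /b; case: ifP.
have step1 : K <= \sum_c \sum_i \sum_U \sum_Y b i U Y c.
  rewrite /K -sum1_card natr_sum; apply: ler_sum => c _.
  move: (Hbad c); rewrite negb_forall => /existsP [i].
  rewrite negb_forall => /existsP [U]; rewrite negb_forall => /existsP [Y].
  rewrite negb_imply -leNgt => hc.
  apply: le_trans (@le_sum1 _ _ _ i _); last by move=> j; do 2 (apply: sumr_ge0 => ? _).
  apply: le_trans (@le_sum1 _ _ _ U _); last by move=> j; apply: sumr_ge0 => ? _.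
  apply: le_trans (@le_sum1 _ _ _ Y _) => //.
  by rewrite /b hc.
have step2 : \sum_c \sum_i \sum_U \sum_Y b i U Y c = \sum_i \sum_U \sum_Y \sum_c b i U Y c.
  rewrite exchange_big; apply: eq_bigr => i _; rewrite exchange_big.
  by apply: eq_bigr => U _; rewrite exchange_big.
have step3 : forall i U Y, \sum_c b i U Y c <=
    (if (1 <= #|U|)%N && (#|Y| <= #|U|)%N then K * (N1 ^+ (5 * #|U|))^-1 else 0).
  move=> i U Y; rewrite /b; case hc : (cond U Y); last first.
    rewrite big1 //; case: ifP => // _.
    by rewrite mulr_ge0 ?invr_ge0 ?exprn_ge0 // ltW.
  move: hc; rewrite /cond => /and3P [h1 h2 h3]; rewrite h1 h2 /=.
  rewrite sum_if_card mulr1.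
  apply: le_trans (@bad_count _ _ _ _ i _ kp) _.
  rewrite /K card_ffun card_ord natrX ler_pM2l ?exprn_gt0 ?ltr0n //.
  rewrite -(ler_pM2r (exprn_gt0 (5 * #|U|) N1gt0)) mulVf ?expf_neq0 ?gt_eqF //.
  by apply: Hnum.
pose g (u : nat) : R := if (1 <= u)%N then K * (N1 ^+ (4 * u))^-1 else 0.
have N1ge1 : 1 <= N1 by rewrite ler1n.
have step4 : forall U : {set T}, \sum_(Y : {set T}) (if (1 <= #|U|)%N && (#|Y| <= #|U|)%N
     then K * (N1 ^+ (5 * #|U|))^-1 else 0) <= g #|U|.
  move=> U; rewrite /g; case: (1 <= #|U|)%N => /=; last by rewrite big1.
  rewrite sum_if_card.
  have hc := card_small_sets T #|U|.
  apply: le_trans (ler_wpM2r _ (_ : _ <= N1 ^+ #|U|)) _.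
  - by rewrite mulr_ge0 ?invr_ge0 ?exprn_ge0 // ltW.
  - by rewrite /N1 -natrX ler_nat.
  rewrite (_ : (5 * #|U| = #|U| + 4 * #|U|)%N); last by rewrite mulSn.
  rewrite exprD le_eqVlt; apply/orP; left; apply/eqP; field.
  by rewrite !expf_neq0 // gt_eqF.
have step5 : \sum_(U : {set T}) g #|U| <= N1 * (K / N1 ^+ 3).
  rewrite (@group_sizes _ _ g).
  apply: le_trans (_ : \sum_(u < #|T|.+1) K / N1 ^+ 3 <= _); last first.
    by rewrite sumr_const card_ord -mulr_natl.
  apply: ler_sum => u _; rewrite /g; case: ifP => hu; last first.
    by rewrite mulr0 mulr_ge0 ?invr_ge0 ?exprn_ge0 // ltW.
  have hc : (#|[set U : {set T} | #|U| == u]| <= #|T|.+1 ^ u)%N.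
    apply: leq_trans (card_small_sets T u).
    by apply: subset_leq_card; apply/subsetP => U; rewrite !inE => /eqP ->.
  apply: le_trans (ler_wpM2r _ (_ : _ <= N1 ^+ u)) _.
  - by rewrite mulr_ge0 ?invr_ge0 ?exprn_ge0 // ltW.
  - by rewrite /N1 -natrX ler_nat.
  rewrite (_ : (4 * u = u + 3 * u)%N); last by rewrite mulSn.
  rewrite exprD.
  have -> : N1 ^+ u * (K / (N1 ^+ u * N1 ^+ (3 * u))) = K / N1 ^+ (3 * u).
    by field; rewrite !expf_neq0 // gt_eqF.
  rewrite ler_pM2l // lef_pV2 ?posrE ?exprn_gt0 //.
  rewrite (_ : (3 * u = 3 + 3 * u.-1)%N); last by rewrite -mulnS prednK.
  by rewrite exprD ler_peMr ?exprn_ge0 ?exprn_ege1 // ltW.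
have step6 : K <= k%:R * (N1 * (K / N1 ^+ 3)).
  apply: le_trans step1 _; rewrite step2.
  apply: le_trans (_ : _ <= \sum_(i < k) (N1 * (K / N1 ^+ 3))) _; last first.
    by rewrite sumr_const card_ord mulr_natl.
  apply: ler_sum => i _.
  apply: le_trans step5; apply: ler_sum => U _.
  apply: le_trans (step4 U); apply: ler_sum => Y _; exact: step3.
have N1ge2 : 2 <= N1 by rewrite /N1 ler_nat ltnS.
have kN : k%:R <= N1 by rewrite ler_nat.
have : k%:R * (N1 * (K / N1 ^+ 3)) <= K / N1.
  apply: le_trans (ler_wpM2r _ kN) _.
    by rewrite mulr_ge0 ?divr_ge0 ?exprn_ge0 // ltW.
  rewrite le_eqVlt; apply/orP; left; apply/eqP; field.
  by rewrite -[1 : R]/(1%:R) -natrD pnatr_eq0.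
move=> h; have := le_trans step6 h.
rewrite ler_pdivlMr // => h2; nra.
Qed.

Lemma num_ineq (R : realType) (eps s k L c l1 u m : R) :
  0 < eps -> eps < 1 -> 0 < k -> 1 <= L -> 0 < c -> c <= 1 -> l1 <= 2 * c * L ->
  1 <= u -> s * u < m -> 10 ^+ 5 * L ^+ 3 <= eps * s / k ->
  eps * s / (10 ^+ 4 * k * L ^+ 2) * u * c - m / (2 * k) + 5 * u * l1 <= 0.
Proof.
move=> e0 e1 k0 L1 c0 c1 hl1 u1 hm hA.
set A := s / k.
have L0 : 0 < L by lra.
have L3 : 1 <= L ^+ 3 by rewrite exprn_ege1.
have L2 : 1 <= L ^+ 2 by rewrite exprn_ege1.
have LL3 : L <= L ^+ 3 by rewrite exprS; nra.
have hA' : 10 ^+ 5 * L ^+ 3 <= eps * A by rewrite /A mulrA.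
have A0 : 0 < A.
  have : 0 < eps * A by apply: lt_le_trans hA'; rewrite mulr_gt0 ?exprn_gt0 //; lra.
  by rewrite pmulr_rgt0.
have hA2 : 10 ^+ 5 * L <= A.
  apply: le_trans (_ : 10 ^+ 5 * L ^+ 3 <= A).
    by rewrite ler_pM2l ?exprn_gt0.
  apply: le_trans hA' _; rewrite ler_piMl //; lra.
have hs' : eps * s / (10 ^+ 4 * k * L ^+ 2) <= A / 10 ^+ 4.
  have -> : eps * s / (10 ^+ 4 * k * L ^+ 2) = (eps / L ^+ 2) * (A / 10 ^+ 4).
    by rewrite /A; field; rewrite !gt_eqF ?exprn_gt0.
  apply: ler_piMl; first by rewrite divr_ge0 ?exprn_ge0 // ltW.
  rewrite ler_pdivrMr ?exprn_gt0 // mul1r; lra.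
have t1 : eps * s / (10 ^+ 4 * k * L ^+ 2) * u * c <= A / 10 ^+ 4 * u.
  rewrite -mulrA; apply: le_trans (ler_wpM2r _ hs') _.
    by rewrite mulr_ge0 //; lra.
  apply: ler_wpM2l; first by rewrite divr_ge0 ?exprn_ge0 ?ltW.
  nra.
have t2 : A * u / 2 <= m / (2 * k).
  have -> : m / (2 * k) = (m / k) / 2 by field; rewrite gt_eqF.
  rewrite ler_pM2r; last by lra.
  rewrite /A mulrAC ler_pM2r ?invr_gt0 //; lra.
have t3 : 5 * u * l1 <= A / 10 ^+ 4 * u.
  have h1 : l1 <= 2 * L by nra.
  have h2 : 10 * L <= A / 10 ^+ 4.
    rewrite ler_pdivlMr ?exprn_gt0 //.
    suff -> : 10 * L * 10 ^+ 4 = 10 ^+ 5 * L :> R by [].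
    ring.
  have u0 : 0 <= u by lra.
  nra.
have Au : 0 <= A * u by rewrite mulr_ge0 //; lra.
lra.
Qed.

Definition Sset (T : finType) (E : {set {set T}}) (U Y : {set T}) : {set {set T}} :=
  [set e in E | [exists a in U, exists b, [&& b \notin U, b \notin Y & e == [set a; b]]]].
Arguments Sset {T}.

Lemma nbh_sub (T : finType) (E : {set {set T}}) (U Y : {set T}) :
  nbh (E :\: Sset E U Y) U \subset Y.
Proof.
apply/subsetP => x; rewrite inE => /andP [xU /existsP [a /andP [aU]]].
rewrite in_setD => /andP [notS inE0].
case: (boolP (x \in Y)) => // xY.
move: notS; rewrite inE inE0 /=; case/negP.
apply/existsP; exists a; rewrite aU /=; apply/existsP; exists x.
by rewrite xU xY eqxx.
Qed.

Lemma Sset_sub (T : finType) (E G F : {set {set T}}) (U : {set T}) (P : pred {set T}) :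
  (forall e, e \in E -> P e -> e \in G) ->
  [set e in Sset E U (nbh (G :\: F) U) | P e] \subset F.
Proof.
move=> hG; apply/subsetP => e; rewrite !inE => /andP [/andP [eE /existsP [a /andP [aU]]]].
move=> /existsP [b /and3P [bU bY /eqP ee]] Pe.
case: (boolP (e \in F)) => // eF; exfalso.
move: bY; rewrite inE bU /=; case/negP; apply/existsP; exists a; rewrite aU /=.
by rewrite -ee in_setD eF hG.
Qed.

Theorem mainTheorem16 (R : realType) :
  exists (N0 : nat) (S0 : R),
  forall (T : finType) (E : {set {set T}}) (s eps : R) (k : nat),
    (N0 <= #|T|)%N -> S0 <= s -> (0 < k)%N ->
    0 < eps -> eps < 1 ->
    simple_graph E ->
    expander E eps s ->
    10 ^+ 5 * (log2 (#|T|%:R : R)) ^+ 3 <= eps * s / k%:R ->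
    exists G : 'I_k -> {set {set T}},
      (forall i j, i != j -> [disjoint G i & G j]) /\
      E = \bigcup_(i < k) G i /\
      (forall i, expander (G i) (eps / 4)
         (eps * s / (10 ^+ 4 * k%:R * (log2 (#|T|%:R : R)) ^+ 2))).
Proof.
exists 2%N, 0 => T E s eps k hn _ kp e0 e1 hsimp hexp hbound.
set n := #|T| in hn hexp hbound *.
set L := log2 (n%:R : R) in hexp hbound *.
have c0 := ln2_gt0 R.
have c1 : ln (2 : R) <= 1.
  have h : ln (1 + 1 : R) <= 1 by apply: le_ln1Dx; lra.
  by move: h; rewrite (_ : (1 + 1 : R) = 2) //; lra.
have n2 : (2 : R) <= n%:R by rewrite ler_nat.
have hln : ln (2 : R) <= ln (n%:R : R) by rewrite ler_ln ?posrE //; lra.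
have L1 : 1 <= L by rewrite /L /log2 ler_pdivlMr // mul1r.
have L0 : 0 < L by lra.
have n0 : (0 < n)%N by apply: ltn_trans hn.
have hl1 : ln ((n.+1)%:R : R) <= 2 * ln 2 * L.
  have -> : 2 * ln (2 : R) * L = ln ((n%:R : R) ^+ 2).
    rewrite lnXn ?ltr0n // /L /log2.
    by rewrite -mulr_natl; field; rewrite mulr1 gt_eqF.
  rewrite ler_ln ?posrE ?exprn_gt0 ?ltr0n //.
  rewrite -natr1; nra.
have [v _] : exists v : T, true.
  by move/card_gt0P: n0 => [v _]; exists v.
set Fv := [set e in E | v \in e].
have hFv : (#|Fv| <= n)%N.
  apply: leq_trans (_ : #|Fv| <= #|[set [set v; w] | w in T]|)%N _; last first.
    exact: leq_imset_card.
  apply: subset_leq_card; apply/subsetP => e; rewrite inE => /andP [eE ve].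
  have := hsimp e eE; rewrite (cardsD1 v) ve add1n => -[] /eqP /cards1P [w hw].
  apply/imsetP; exists w => //.
  by rewrite -hw setD1K.
have sn : s < n%:R.
  rewrite ltNge; apply/negP => hs.
  have hv1 : (1 <= #|[set v]|)%N by rewrite cards1.
  have hv2 : (#|[set v]|%:R : R) <= 2 / 3 * n%:R by rewrite cards1; lra.
  have hv3 : Fv \subset E by apply/subsetP => e; rewrite inE => /andP [].
  have hv4 : (#|Fv|%:R : R) <= s * #|[set v]|%:R.
    by rewrite cards1 mulr1; apply: le_trans hs; rewrite ler_nat.
  have := hexp _ _ hv1 hv2 hv3 hv4.
  have -> : nbh (E :\: Fv) [set v] = set0.
    apply/setP => w; rewrite !inE; apply/negP => /andP [_ /existsP [u /andP [uv]]].
    rewrite inE in uv; rewrite (eqP uv) in_setD => /andP [/negP hnot hE].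
    by apply: hnot; rewrite inE hE !inE eqxx.
  rewrite cards1 cards0 mulr1 -/n -/L => h.
  have : 0 < eps / L ^+ 2 by rewrite divr_gt0 ?exprn_gt0.
  lra.
have k0 : (0 : R) < k%:R by rewrite ltr0n.
have ks : k%:R <= eps * s.
  have h1 : 1 <= eps * s / k%:R.
    apply: le_trans hbound; rewrite -[1]mul1r ler_pM ?exprn_ege1 //; lra.
  by move: h1; rewrite ler_pdivlMr // mul1r.
have kn : (k <= n.+1)%N.
  have : k%:R < (n.+1)%:R :> R.
    rewrite -natr1; apply: (le_lt_trans ks).
    have s0 : 0 < s by have := lt_le_trans k0 ks; rewrite pmulr_rgt0.
    nra.
  by rewrite ltr_nat => /ltnW.
set s' := eps * s / (10 ^+ 4 * k%:R * L ^+ 2).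
have Hnum : forall u m : nat, (1 <= u)%N -> s * u%:R < m%:R ->
    expR (s' * u%:R * ln 2 - m%:R / (2 * k%:R)) * ((n.+1)%:R) ^+ (5 * u) <= 1.
  move=> u m u1 hm.
  have -> : ((n.+1)%:R : R) ^+ (5 * u) = expR ((5 * u)%:R * ln (n.+1)%:R).
    by rewrite expRM_natl lnK // posrE ltr0n.
  rewrite -expRD expR_le1.
  have u1' : (1 : R) <= u%:R by rewrite ler1n.
  have := @num_ineq R eps s k%:R L (ln 2) (ln (n.+1)%:R) u%:R m%:R e0 e1 k0 L1 c0 c1 hl1 u1' hm hbound.
  by rewrite natrM.
have [c Hc] := @exists_good R T k (Sset E) s s' kp kn n0 Hnum.
exists (fun i => [set e in E | c e == i]); split.
  move=> i j ij; rewrite -setI_eq0; apply/eqP/setP => e; rewrite !inE.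
  apply/negP => /andP [/andP [_ /eqP ci] /andP [_ /eqP cj]].
  by move: ij; rewrite -ci -cj eqxx.
split.
  apply/setP => e; apply/idP/bigcupP => [eE|[i _]].
    by exists (c e) => //; rewrite inE eE eqxx.
  by rewrite inE => /andP [].
move=> i U F hU1 hU2 hFsub hFc.
rewrite -/n -/L -/s' in hU2 hFc *.
set Y := nbh ([set e in E | c e == i] :\: F) U.
rewrite leNgt; apply/negP => hY.
have L2 : 0 < L ^+ 2 by rewrite exprn_gt0.
have u1 : (1 : R) <= #|U|%:R by rewrite ler1n.
set X := eps * #|U|%:R / L ^+ 2.
have X0 : 0 < X by rewrite /X divr_gt0 // mulr_gt0 //; lra.
have hX4 : eps / 4 * #|U|%:R / L ^+ 2 = X / 4 by rewrite /X; field; rewrite gt_eqF.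
rewrite hX4 in hY.
have hYU : (#|Y| <= #|U|)%N.
  rewrite -(ler_nat R); apply: ltW; apply: (lt_le_trans hY).
  have : X <= #|U|%:R.
    have Lsq : 1 <= L ^+ 2 by rewrite exprn_ege1.
    rewrite /X ler_pdivrMr //; nra.
  lra.
have hm : s * #|U|%:R < #|Sset E U Y|%:R.
  rewrite ltNge; apply/negP => hle.
  have hSE : Sset E U Y \subset E by apply/subsetP => e; rewrite inE => /andP [].
  have := hexp U (Sset E U Y) hU1 hU2 hSE hle.
  rewrite -/n -/L -/X => h.
  have := subset_leq_card (@nbh_sub T E U Y).
  rewrite -(ler_nat R) => h2.
  lra.
have := Hc i U Y hU1 hYU hm.
have hsub := @Sset_sub T E [set e in E | c e == i] F U (fun e => c e == i)
  (fun e eE ce => ltac:(by rewrite inE eE ce)).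
have := subset_leq_card hsub; rewrite -(ler_nat R) => h3.
lra.
Qed.
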